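(* In the FIND setting of the context, fix a leaf cluster $\mathcal C_r$ and a consistent ordering of $\mathcal T_r^+$. If $\mathcal C_i$ and $\mathcal C_j$ are the two children of $\mathcal C_k$ in $\mathcal T_r^+$, then $\boldsymbol\Sigma_k(\mathcal B_i,\mathcal B_j)=\boldsymbol\Sigma(\mathcal B_i,\mathcal B_j)$ and $\boldsymbol\Sigma_k(\mathcal B_j,\mathcal B_i)=\boldsymbol\Sigma(\mathcal B_j,\mathcal B_i)$.
   Context: Setting (FIND). $\mathcal M$ is a finite set of mesh nodes; $\mathbf A$ is an invertible complex matrix indexed by $\mathcal M\times\mathcal M$, structurally symmetric ($A_{ij}\neq0\iff A_{ji}\neq0$); distinct nodes $i,j$ are connected if $A_{ij}\neq 0$. $\boldsymbol\Sigma$ is a complex matrix indexed by $\mathcal M\times\mathcal M$ with $\Sigma_{ij}=0$ whenever $i\neq j$ and $i,j$ are not connected. $\dagger$ is conjugate transpose, $\mathbf X^{-\dagger}=(\mathbf X^{-1})^\dagger$. $\mathbf X(X,Y)$ is the submatrix with rows in $X$, columns in $Y$. For a cluster $\mathcal C\subseteq\mathcal M$: boundary set $\mathcal B_{\mathcal C}=\{i\in\mathcal C: A_{ij}\neq 0\text{ for some } j\notin\mathcal C\}$, inner set $\mathcal I_{\mathcal C}=\mathcal C\setminus\mathcal B_{\mathcal C}$; for $\mathcal C_g$ write $\mathcal B_g,\mathcal I_g$. Cluster tree: $\mathcal T$ is a rooted binary tree of clusters with root $\mathcal M$, each non-leaf cluster the disjoint union of its two children. For a leaf $\mathcal C_r$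 with path $r=a_0,\dots,a_d$ (root) and $b_k$ the sibling of $a_k$, the augmented tree $\mathcal T_r^+$ has root $\mathcal C_{-r}=\mathcal M\setminus\mathcal C_r$; for $0\le k\le d-2$, $\mathcal C_{-a_k}=\mathcal M\setminus\mathcal C_{a_k}$ has children $\mathcal C_{b_k}$ and $\mathcal C_{-a_{k+1}}$, with $\mathcal C_{-a_{d-1}}$ identified with $\mathcal C_{b_{d-1}}$; each basic cluster $\mathcal C_{b_k}$ carries its subtree from $\mathcal T$. Private inner nodes: $\mathcal S_g=\mathcal I_g$ for a leaf $g$ of $\mathcal T_r^+$; $\mathcal S_g=\mathcal I_g\setminus(\mathcal I_i\cup\mathcal I_j)$ if $g$ has children $i,j$. Consistent ordering: a total order $g_1,\dots,g_m$ of the nodes of $\mathcal T_r^+$ with every node after all its descendants. Elimination: $\mathbf A_{g_1}=\mathbf A$, $\boldsymbol\Sigma_{g_1}=\boldsymbol\Sigma$; for each $g$ (with $\mathbf A_g(\mathcal S_g,\mathcal S_g)$ invertible), $\mathcal L_g=\mathbf A_g(\mathcal B_g,\mathcal S_g)\mathbf A_g(\mathcal S_g,\mathcal S_g)^{-1}$, $\mathbf L_g$ is the identity on $\mathcal M$ except $\mathbf L_g(\mathcal B_g,\mathcal S_g)=\mathcal L_g$, $\mathbf A_{g+}=\mathbf L_g^{-1}\mathbf A_g$, $\boldsymbol\Sigma_{g+}=\mathbf L_g^{-1}\boldsymbol\Sigma_g\mathbf L_g^{-\dagger}$, and $\mathbf A_{g_{t+1}}=\mathbf A_{g_t+}$,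 $\boldsymbol\Sigma_{g_{t+1}}=\boldsymbol\Sigma_{g_t+}$. Thus $\boldsymbol\Sigma_k$ is the matrix just before eliminating $\mathcal S_k$. *)

(* Defs.v *)
From HB Require Import structures.
From mathcomp Require Import all_boot all_order all_algebra.
From mathcomp Require Import reals complex.
Set Implicit Arguments. Unset Strict Implicit. Unset Printing Implicit Defensive.
Import Order.TTheory GRing.Theory Num.Theory.
Local Open Scope ring_scope.

(* Mesh nodes M = 'I_n ; clusters are subsets {set 'I_n}. *)

Inductive ctree (n : nat) : Type :=
| CLeaf of {set 'I_n}
| CNode of {set 'I_n} & ctree n & ctree n.
Arguments CLeaf {n}.
Arguments CNode {n}.

Definition cluster n (t : ctree n) : {set 'I_n} :=
  match t with CLeaf C => C | CNode C _ _ => C end.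

Fixpoint wf_nodes n (t : ctree n) : bool :=
  match t with
  | CLeaf _ => true
  | CNode C l r =>
      [&& C == cluster l :|: cluster r, [disjoint cluster l & cluster r],
          wf_nodes l & wf_nodes r]
  end.

Definition cluster_tree n (t : ctree n) : bool :=
  (cluster t == [set: 'I_n]) && wf_nodes t.

(* Positions of nodes: paths from the root, false = first child, true = second. *)
Fixpoint subtree n (t : ctree n) (q : seq bool) : option (ctree n) :=
  match q with
  | [::] => Some t
  | b :: q' =>
      match t with
      | CLeaf _ => None
      | CNode _ l r => subtree (if b then r else l) q'
      end
  end.

Definition is_node n (t : ctree n) (q : seq bool) : bool :=
  if subtree t q is Some _ then true else false.

Definition leaf_path n (t : ctree n) (q : seq bool) : bool :=
  if subtree t q is Some (CLeaf _) then true else false.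

Definition clus n (t : ctree n) (q : seq bool) : {set 'I_n} :=
  if subtree t q is Some s then cluster s else set0.

(* Augmented tree T_r^+ for the leaf C_r reached by path p.
   Descending from the root along p, acc is the augmented tree whose root is
   C_{-a} = M \ C_a for the current node a (None when a is the root).
   Going from a_{k+1} into child a_k (sibling b_k) we build
   C_{-a_k} = M \ C_{a_k} with children C_{b_k} and C_{-a_{k+1}};
   for the child a_{d-1} of the root, C_{-a_{d-1}} is identified with C_{b_{d-1}}. *)
Definition aug_join n (C : {set 'I_n}) (b : ctree n) (acc : option (ctree n)) :=
  match acc with None => b | Some a => CNode C b a end.

Fixpoint aug n (t : ctree n) (p : seq bool) (acc : option (ctree n))
  : option (ctree n) :=
  match t, p with
  | CLeaf _, [::] => acc
  | CNode _ l r, false :: p' => aug l p' (Some (aug_join (~: cluster l) r acc))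
  | CNode _ l r, true :: p' => aug r p' (Some (aug_join (~: cluster r) l acc))
  | _, _ => None
  end.

Definition consistent_ordering n (t : ctree n) (ord : seq (seq bool)) : Prop :=
  [/\ uniq ord,
      (forall q, (q \in ord) = is_node t q) &
      (forall q q', q \in ord -> q' \in ord -> prefix q q' -> q != q' ->
                    index q' ord < index q ord)%N].

Section Elim.
Variables (C : numClosedFieldType) (n : nat).

Definition bnd (A : 'M[C]_n) (X : {set 'I_n}) : {set 'I_n} :=
  [set i in X | [exists j, (j \notin X) && (A i j != 0)]].
Definition inner (A : 'M[C]_n) (X : {set 'I_n}) : {set 'I_n} := X :\: bnd A X.

Definition priv (A : 'M[C]_n) (t : ctree n) (g : seq bool) : {set 'I_n} :=
  match subtree t g with
  | Some (CLeaf X) => inner A X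
  | Some (CNode X l r) => inner A X :\: (inner A (cluster l) :|: inner A (cluster r))
  | None => set0
  end.

Definition subm (X Y : {set 'I_n}) (M : 'M[C]_n) : 'M[C]_(#|X|, #|Y|) :=
  \matrix_(i < #|X|, j < #|Y|) M (enum_val i) (enum_val j).

Definition embm (X Y : {set 'I_n}) (K : 'M[C]_(#|X|, #|Y|)) : 'M[C]_n :=
  \matrix_(i, j)
    match [pick k : 'I_#|X| | enum_val k == i], [pick l : 'I_#|Y| | enum_val l == j] with
    | Some k, Some l => K k l
    | _, _ => 0
    end.

Definition ctr (M : 'M[C]_n) : 'M[C]_n := (map_mx Num.conj M)^T.

Definition Lmat (Ag : 'M[C]_n) (B S : {set 'I_n}) : 'M[C]_n :=
  1%:M + embm (subm B S Ag *m invmx (subm S S Ag)).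

Definition elim_step (A : 'M[C]_n) (t : ctree n)
    (st : 'M[C]_n * 'M[C]_n) (g : seq bool) : 'M[C]_n * 'M[C]_n :=
  let L := Lmat st.1 (bnd A (clus t g)) (priv A t g) in
  (invmx L *m st.1, invmx L *m st.2 *m ctr (invmx L)).

Definition elim_upto (A Sig : 'M[C]_n) (t : ctree n) (ord : seq (seq bool)) (m : nat) :=
  foldl (elim_step A t) (A, Sig) (take m ord).

(* A_k, Sigma_k : the matrices just before eliminating S_k *)
Definition A_at A Sig t ord (k : seq bool) : 'M[C]_n :=
  (elim_upto A Sig t ord (index k ord)).1.
Definition Sigma_at A Sig t ord (k : seq bool) : 'M[C]_n :=
  (elim_upto A Sig t ord (index k ord)).2.

End Elim.

(* Main.v *)
Require Import Defs.
From HB Require Import structures.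
From mathcomp Require Import all_boot all_order all_algebra.
From mathcomp Require Import reals complex.
Import Order.TTheory GRing.Theory Num.Theory.
Local Open Scope ring_scope.

Lemma embm_supp (C : numClosedFieldType) (n : nat) (X Y : {set 'I_n})
  (K : 'M[C]_(#|X|, #|Y|)) x y : embm K x y != 0 -> (x \in X) && (y \in Y).
Proof.
rewrite /embm mxE.
case: (pickP (fun k : 'I_#|X| => enum_val k == x)) => [k /eqP <-|_];
  case: (pickP (fun l : 'I_#|Y| => enum_val l == y)) => [l /eqP <-|_];
  rewrite ?eqxx //.
by rewrite !enum_valP.
Qed.

Lemma Lmat_inv (C : numClosedFieldType) (n : nat) (Ag : 'M[C]_n) (B S : {set 'I_n}) :
  (forall z, z \in S -> z \notin B) ->
  invmx (Lmat Ag B S) = 1%:M - embm (subm B S Ag *m invmx (subm S S Ag)).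
Proof.
move=> dBS; set E := embm _.
have EE : E *m E = 0.
  apply/matrixP => x y; rewrite !mxE big1 // => z _.
  case: (boolP (z \in S)) => zS.
    have -> : E z y = 0.
      by apply/eqP; apply: contraNT (dBS z zS) => /embm_supp /andP[].
    by rewrite mulr0.
  have -> : E x z = 0.
    by apply/eqP; apply: contraNT zS => /embm_supp /andP[].
  by rewrite mul0r.
have LD : Lmat Ag B S *m (1%:M - E) = 1%:M.
  rewrite /Lmat -/E mulmxDl mul1mx mulmxBr mulmx1 EE subr0.
  by rewrite subrK.
have [Lu _] := mulmx1_unit LD.
have := congr1 (mulmx (invmx (Lmat Ag B S))) LD.
by rewrite mulmxA mulVmx // mul1mx mulmx1 => <-.
Qed.

Lemma left_entry (C : numClosedFieldType) (n : nat) (E M : 'M[C]_n) (B S : {set 'I_n}) x b :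
  (forall u v, E u v != 0 -> (u \in B) && (v \in S)) ->
  x \notin B \/ (forall a, a \in S -> M a b = 0) ->
  ((1%:M - E) *m M) x b = M x b.
Proof.
move=> Es H; rewrite mulmxBl mul1mx mxE [(- (_ : 'M__)) _ _]mxE.
have -> : (E *m M) x b = 0.
  rewrite mxE big1 // => a _.
  case: H => [xB|Ha].
    have -> : E x a = 0.
      by apply/eqP; apply: contraNT xB => /Es /andP[].
    by rewrite mul0r.
  case: (boolP (a \in S)) => aS; first by rewrite Ha // mulr0.
  have -> : E x a = 0 by apply/eqP; apply: contraNT aS => /Es /andP[].
  by rewrite mul0r.
by rewrite subr0.
Qed.

Lemma ctrB1 (C : numClosedFieldType) (n : nat) (E : 'M[C]_n) :
  ctr (1%:M - E) = 1%:M - ctr E.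
Proof.
apply/matrixP => i j; rewrite /ctr !mxE rmorphB /= rmorph_nat eq_sym //.
Qed.

Lemma right_entry (C : numClosedFieldType) (n : nat) (E M : 'M[C]_n) (B S : {set 'I_n}) x y :
  (forall u v, E u v != 0 -> (u \in B) && (v \in S)) ->
  y \notin B \/ (forall b, b \in S -> M x b = 0) ->
  (M *m ctr (1%:M - E)) x y = M x y.
Proof.
move=> Es H; rewrite ctrB1 mulmxBr mulmx1 mxE [(- (_ : 'M__)) _ _]mxE.
have -> : (M *m ctr E) x y = 0.
  rewrite mxE big1 // => b _; rewrite /ctr !mxE.
  case: H => [yB|Hb].
    have -> : E y b = 0 by apply/eqP; apply: contraNT yB => /Es /andP[].
    by rewrite rmorph0 mulr0.
  case: (boolP (b \in S)) => bS; first by rewrite Hb // mul0r.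
  have -> : E y b = 0 by apply/eqP; apply: contraNT bS => /Es /andP[].
  by rewrite rmorph0 mulr0.
by rewrite subr0.
Qed.
Lemma subtree_cat n (t : ctree n) q w :
  subtree t (q ++ w) = if subtree t q is Some s then subtree s w else None.
Proof.
elim: q t => [|b q IH] [X|X l r] //=.
Qed.

Lemma wf_subtree n (t : ctree n) q s :
  wf_nodes t -> subtree t q = Some s -> wf_nodes s.
Proof.
elim: q t => [|b q IH] [X|X l r] /=; try by move=> w [<-].
  by [].
move=> /and4P[_ _ wl wr].
by case: b; apply: IH.
Qed.

Lemma clus_sub n (t : ctree n) q : wf_nodes t -> clus t q \subset cluster t.
Proof.
elim: t q => [X|X l IHl r IHr] [|b q] //= w; rewrite /clus /=.
- by rewrite sub0set.
move: w => /and4P[/eqP -> _ wl wr].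
case: b.
  apply: subset_trans (IHr q wr) _; exact: subsetUr.
apply: subset_trans (IHl q wl) _; exact: subsetUl.
Qed.

Lemma clus_prefix n (t : ctree n) q q' :
  wf_nodes t -> prefix q q' -> clus t q' \subset clus t q.
Proof.
move=> w /prefixP[u ->]; rewrite {1}/clus subtree_cat.
case E: (subtree t q) => [s|]; last by rewrite sub0set.
have -> : clus t q = cluster s by rewrite /clus E.
by have := @clus_sub _ _ u (@wf_subtree _ _ _ _ w E); rewrite /clus.
Qed.

Lemma laminar n (t : ctree n) q q' x :
  wf_nodes t -> x \in clus t q -> x \in clus t q' -> prefix q q' || prefix q' q.
Proof.
elim: t q q' => [X|X l IHl r IHr] [|b q] [|b' q'] //=; rewrite /clus /=;
  try by rewrite inE.
move=> /and4P[_ dlr wl wr] Hx Hx'.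
case: b b' Hx Hx' => [] [] /= Hx Hx'.
- exact: IHr Hx Hx'.
- have := subsetP (@clus_sub _ _ q wr) _ Hx.
  have := subsetP (@clus_sub _ _ q' wl) _ Hx'.
  by move=> /(disjointFr dlr) ->.
- have := subsetP (@clus_sub _ _ q wl) _ Hx.
  have := subsetP (@clus_sub _ _ q' wr) _ Hx'.
  by move=> h /(disjointFr dlr); rewrite h.
- exact: IHl Hx Hx'.
Qed.
Lemma setfact1 n (L R : {set 'I_n}) : [disjoint L & R] -> ~: R = L :|: ~: (L :|: R).
Proof.
move=> d; apply/setP => z; rewrite !inE.
by case: (boolP (z \in L)) => zL //=; rewrite (disjointFr d zL).
Qed.

Lemma aug_wf n (t : ctree n) p acc Tp : wf_nodes t ->
  (if acc is Some a then wf_nodes a && (cluster a == ~: cluster t)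
   else cluster t == setT) ->
  aug t p acc = Some Tp -> wf_nodes Tp.
Proof.
elim: t p acc => [X|X l IHl r IHr] [|b p] acc //=.
- by case: acc => [a|] // _ /andP[wa _] [<-].
- move=> /and4P[/eqP eX dlr wl wr] Hacc.
  case: b.
  + apply: IHr wr _.
    case: acc Hacc => [a|] /= => [/andP[wa /eqP ca]|/eqP cX].
      rewrite wa wl eqxx andbT ca eX -setfact1 ?eqxx //=.
      rewrite andbT disjoints_subset setCK; exact: subsetUl.
    rewrite wl /=; apply/eqP/setP => z; rewrite !inE.
    have := in_setT z; rewrite -cX eX inE.
    case: (boolP (z \in cluster l)) => zl /=; last by move->.
    by rewrite (disjointFr dlr zl).
  + apply: IHl wl _.
    case: acc Hacc => [a|] /= => [/andP[wa /eqP ca]|/eqP cX].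
      rewrite wa wr eqxx andbT ca eX [cluster l :|: _]setUC -setfact1 ?eqxx //=.
        rewrite andbT disjoints_subset setCK; exact: subsetUl.
      by rewrite disjoint_sym.
    rewrite wr /=; apply/eqP/setP => z; rewrite !inE.
    have := in_setT z; rewrite -cX eX inE.
    case: (boolP (z \in cluster r)) => zr /=; last by rewrite orbF => ->.
    by rewrite disjoint_sym in dlr; rewrite (disjointFr dlr zr).
Qed.

Lemma index_take (T : eqType) (s : seq T) m g : g \in take m s -> (index g s < m)%N.
Proof.
move=> H; rewrite -(cat_take_drop m s) index_cat H.
apply: (@leq_trans (size (take m s))); first by rewrite index_mem.
by rewrite size_take; case: ltnP => // /ltnW.
Qed.

Lemma no_anc (ord : seq (seq bool)) m g' : uniq ord ->
  (forall q q', q \in ord -> q' \in ord -> prefix q q' -> q != q' ->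
     (index q' ord < index q ord)%N) ->
  (m < size ord)%N -> g' \in take m ord -> prefix g' (nth [::] ord m) -> False.
Proof.
move=> u anc Hm gin P.
have h1 := @index_take _ _ _ _ gin.
have gi := index_uniq [::] Hm u.
have g'o := mem_take gin.
case: (eqVneq g' (nth [::] ord m)) => [E|ne].
  by move: h1; rewrite E gi ltnn.
have := anc _ _ g'o (mem_nth [::] Hm) P ne; rewrite gi => h2.
by have := ltn_trans h1 h2; rewrite ltnn.
Qed.

Lemma prefix_rcons (k g : seq bool) b :
  prefix g (rcons k b) -> g = rcons k b \/ prefix g k.
Proof.
move/prefixP => [w]; case/lastP: w => [|w c] E.
  by left; rewrite cats0 in E.
right; rewrite -rcons_cat in E; case/rcons_inj: E => -> _.
by apply/prefixP; exists w.
Qed.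

Lemma priv_inner (C : numClosedFieldType) n (A : 'M[C]_n) t g :
  priv A t g \subset inner A (clus t g).
Proof.
rewrite /priv /clus; case: (subtree t g) => [[X|X l r]|] //=.
  exact: subsetDl.
exact: sub0set.
Qed.

Theorem corollary1 (R : realType) (n : nat) (A Sig : 'M[R[i]]_n)
    (T : ctree n) (p : seq bool) (Tp : ctree n) (ord : seq (seq bool)) :
  A \in unitmx ->
  (forall i j, (A i j != 0) = (A j i != 0)) ->
  (forall i j, i != j -> A i j = 0 -> Sig i j = 0) ->
  cluster_tree T ->
  leaf_path T p ->
  aug T p None = Some Tp ->
  consistent_ordering Tp ord ->
  (forall g, g \in ord ->
     subm (priv A Tp g) (priv A Tp g) (A_at A Sig Tp ord g) \in unitmx) ->
  forall k Ck Ti Tj, subtree Tp k = Some (CNode Ck Ti Tj) ->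
  let Bi := bnd A (clus Tp (rcons k false)) in
  let Bj := bnd A (clus Tp (rcons k true)) in
  subm Bi Bj (Sigma_at A Sig Tp ord k) = subm Bi Bj Sig /\
  subm Bj Bi (Sigma_at A Sig Tp ord k) = subm Bj Bi Sig.
Proof.
move=> Au Asym SigA cT lp aT [uord memord ancord] _ k Ck Ti Tj sk Bi Bj.
have wfT : wf_nodes T by case/andP: cT.
have wfTp : wf_nodes Tp.
  by apply: (@aug_wf _ _ _ _ _ wfT _ aT); case/andP: cT.
have bndC : forall X (z : 'I_n), z \in bnd A X -> z \in X.
  by move=> X z; rewrite inE => /andP[].
have Inv : forall m, (m <= size ord)%N -> forall x y,
    (elim_upto A Sig Tp ord m).2 x y != Sig x y ->
    exists2 g, g \in take m ord & (x \in clus Tp g) && (y \in clus Tp g).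
  elim=> [|m IH] Hm x y.
    by rewrite /elim_upto take0 /= eqxx.
  have Hm' : (m < size ord)%N by [].
  set g := nth [::] ord m.
  have noanc : forall g', g' \in take m ord -> prefix g' g -> False.
    by move=> g' gin P; apply: (@no_anc ord m g' uord ancord Hm' gin P).
  set st := elim_upto A Sig Tp ord m.
  have keep : forall u v, u \in clus Tp g -> v \notin clus Tp g ->
      st.2 u v = Sig u v /\ st.2 v u = Sig v u.
    move=> u v uC vC; split; apply/eqP/negPn/negP => /(IH (ltnW Hm))
      [g' g'in /andP[H1 H2]].
      case/orP: (@laminar _ _ _ _ _ wfTp uC H1) => P.
        by move: vC; rewrite (subsetP (@clus_prefix _ _ _ _ wfTp P) _ H2).
      exact: noanc g'in P.
    case/orP: (@laminar _ _ _ _ _ wfTp uC H2) => P.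
      by move: vC; rewrite (subsetP (@clus_prefix _ _ _ _ wfTp P) _ H1).
    exact: noanc g'in P.
  have Z : forall a z, a \in priv A Tp g -> z \notin clus Tp g ->
      st.2 a z = 0 /\ st.2 z a = 0.
    move=> a z aS zC.
    have := subsetP (@priv_inner _ _ A Tp g) a aS; rewrite inE => /andP[anb aC].
    have Aaz : A a z = 0.
      apply/eqP; apply: contraNT anb => H; rewrite inE aC /=.
      by apply/existsP; exists z; rewrite zC H.
    have Aza : A z a = 0.
      by apply/eqP/negbNE; rewrite Asym Aaz eqxx.
    have neq : a != z by apply: contraNneq zC => <-.
    have [-> ->] := keep a z aC zC.
    by rewrite !SigA // eq_sym.
  move=> H.
  case Ec: ((x \in clus Tp g) && (y \in clus Tp g)).
    exists g => //; by rewrite (take_nth [::] Hm') mem_rcons mem_head.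
  have dBS : forall z, z \in priv A Tp g -> z \notin bnd A (clus Tp g).
    move=> z zS; have := subsetP (@priv_inner _ _ A Tp g) z zS.
    by rewrite inE => /andP[].
  have step : (elim_upto A Sig Tp ord m.+1).2 x y = st.2 x y.
    rewrite /elim_upto (take_nth [::] Hm') foldl_rcons -/(elim_upto A Sig Tp ord m) -/st.
    rewrite /elim_step /= (@Lmat_inv _ _ _ _ _ dBS).
    set E := embm _.
    have Es : forall u v, E u v != 0 ->
        (u \in bnd A (clus Tp g)) && (v \in priv A Tp g).
      by move=> u v; apply: embm_supp.
    rewrite (@right_entry _ _ E _ (bnd A (clus Tp g)) (priv A Tp g) _ _ Es).
      apply: (@left_entry _ _ E _ (bnd A (clus Tp g)) (priv A Tp g) _ _ Es).
      case: (boolP (x \in bnd A (clus Tp g))) => xB; [right|by left].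
      have xC := bndC _ _ xB.
      move=> a aS; apply: (Z a y aS _).1.
      by move: Ec; rewrite xC /= => ->.
    case: (boolP (y \in bnd A (clus Tp g))) => yB; [right|by left].
    have yC := bndC _ _ yB.
    have xC : x \notin clus Tp g by move: Ec; rewrite yC andbT => ->.
    move=> b bS.
    rewrite (@left_entry _ _ E _ (bnd A (clus Tp g)) (priv A Tp g) _ _ Es).
      exact: (Z b x bS xC).2.
    by left; apply: contra xC; apply: bndC.
  move: H; rewrite step => /(IH (ltnW Hm)) [g' g'in Hg'].
  by exists g' => //; rewrite (take_nth [::] Hm') mem_rcons in_cons g'in orbT.
have kord : k \in ord by rewrite memord /is_node sk.
have mk : (index k ord <= size ord)%N := index_size k ord.
have clusb : forall b, clus Tp (rcons k b) = cluster (if b then Tj else Ti).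
  by move=> b; rewrite /clus -cats1 subtree_cat sk; case: b; [case: (Tj) | case: (Ti)].
have := @wf_subtree _ _ _ _ wfTp sk => /and4P[_ dij _ _].
have dis : forall b z, z \in clus Tp (rcons k b) -> z \in clus Tp (rcons k (~~ b)) -> False.
  move=> b z; rewrite !clusb; case: b => /= H1 H2.
    by rewrite disjoint_sym in dij; move: H2; rewrite (disjointFr dij H1).
  by move: H2; rewrite (disjointFr dij H1).
have fin : forall b x y, x \in clus Tp (rcons k b) -> y \in clus Tp (rcons k (~~ b)) ->
    Sigma_at A Sig Tp ord k x y = Sig x y.
  move=> b x y Hx Hy; apply/eqP/negPn/negP => /(Inv _ mk) [g gin /andP[gx gy]].
  case/orP: (@laminar _ _ _ _ _ wfTp Hx gx) => P.
    exact: (dis b y (subsetP (@clus_prefix _ _ _ _ wfTp P) _ gy) Hy).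
  case: (@prefix_rcons _ _ _ P) => [Eg|Pk].
    by apply: (dis b y _ Hy); rewrite -Eg.
  have Hmk : (index k ord < size ord)%N by rewrite index_mem.
  apply: (@no_anc ord (index k ord) g uord ancord Hmk gin).
  by rewrite nth_index.
split; apply/matrixP => u v; rewrite !mxE.
  by apply: (fin false); apply: bndC; apply: enum_valP.
by apply: (fin true); apply: bndC; apply: enum_valP.
Qed.
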